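(* Let $A_1,A_2\subset\mathbb{Z}^2$ be finite with $|A_1|,|A_2|\ge2$ and $\mathbb{Z}A_1+\mathbb{Z}A_2=\mathbb{Z}^2$, and let $f=\bigoplus_{i\in A_1}p^1_i\odot w^i$, $g=\bigoplus_{i\in A_2}p^2_i\odot w^i$ be tropical polynomials with supports $A_1,A_2$. Let $q=(q_1,q_2)\in\mathcal{T}(f)\cap\mathcal{T}(g)$. Then $q$ is a non-transversal intersection point of $\mathcal{T}(f)$ and $\mathcal{T}(g)$ if and only if there exists $l\in\mathbb{R}$ such that $(q_1,q_2,l)$ is a singular point of $\mathcal{T}(f\oplus w_3\odot g)$.
   Context: $\mathbb{K}$ is an algebraically closed field of characteristic $0$ with a rank-one non-archimedean valuation $val$ whose residue field has characteristic $0$. Tropical operations $\oplus=\min$, $\odot=+$, $w^i=\langle i,w\rangle$, all coefficients real; $\mathcal{T}(h)$ is the set where the minimum of the terms of $h$ is attained at least twice. $f\oplus w_3\odot g$ denotes the tropical polynomial $\bigoplus_{i\in A_1}p^1_i\odot w^{(i,0)}\oplus\bigoplus_{i\in A_2}p^2_i\odot w^{(i,1)}$ in $w=(w_1,w_2,w_3)$, with support $A_1\times\{0\}\cup A_2\times\{1\}\subset\mathbb{Z}^3$. For a tropical polynomial $h=\bigoplus_{k\in S}c_k\odot w^k$, a point $\overline q\in\mathcal{T}(h)$ is singular if there exist $H=\sum_{k\in S}a_kx^k$ over $\mathbb{K}$ with $val(a_k)=c_k$ and $b\in(\mathbb{K}^* )^3$ with $val(b)=\overline q$ such that $H(b)=0$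 and all partial derivatives of $H$ vanish at $b$. A point $q\in\mathcal{T}(f)\cap\mathcal{T}(g)$ is a non-transversal intersection point if there exist $F=\sum_{i\in A_1}a^1_ix^i$, $G=\sum_{i\in A_2}a^2_ix^i$ over $\mathbb{K}$ with $val(a^1_i)=p^1_i$, $val(a^2_i)=p^2_i$, and $b\in(\mathbb{K}^* )^2$ with $val(b)=q$, such that $F(b)=G(b)=0$ and the system $F_{x_1}(b)y_1+G_{x_1}(b)y_2=F_{x_2}(b)y_1+G_{x_2}(b)y_2=0$ has a solution $(y_1,y_2)\in(\mathbb{K}^* )^2$. *)

(* Defs.v *)
From HB Require Import structures.
From mathcomp Require Import all_boot all_order all_algebra.
From mathcomp Require Import reals.
Set Implicit Arguments. Unset Strict Implicit. Unset Printing Implicit Defensive.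
Import Order.TTheory GRing.Theory Num.Theory.
Local Open Scope ring_scope.

Section Defs.
Variables (R : realType) (K : closedFieldType).

(* val is a real-valued (rank one) valuation on K^*; its value at 0 is junk. *)
Definition valuation_ring (v : K -> R) : pred K := fun x => (x == 0) || (0 <= v x).
Definition valuation_maxideal (v : K -> R) : pred K := fun x => (x == 0) || (0 < v x).

(* residue field O/m has characteristic 0: n*1 is nonzero in O/m for all n>0 *)
Definition residue_char0 (v : K -> R) : Prop :=
  forall n : nat, (0 < n)%N -> n%:R \notin valuation_maxideal v.

Definition valued_field (v : K -> R) : Prop :=
  [/\ [pchar K] =i pred0,
      (forall x y, x != 0 -> y != 0 -> v (x * y) = v x + v y),
      (forall x y, x != 0 -> y != 0 -> x + y != 0 -> Num.min (v x) (v y) <= v (x + y)),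
      (forall r : R, exists x, x != 0 /\ v x = r)
    & residue_char0 v].

Definition trop_vanish (E : eqType) (W : Type) (pair : E -> W -> R)
  (S : seq E) (c : E -> R) (w : W) : Prop :=
  exists i j, [/\ i \in S, j \in S, i != j,
     c i + pair i w = c j + pair j w &
     forall k, k \in S -> c i + pair i w <= c k + pair k w].

Definition pair2 (i : int * int) (w : R * R) : R := i.1%:~R * w.1 + i.2%:~R * w.2.
Definition pair3 (k : int * int * int) (w : R * R * R) : R :=
  pair2 k.1 w.1 + k.2%:~R * w.2.

Definition ev2 (S : seq (int * int)) (a : int * int -> K) (x : K * K) : K :=
  \sum_(i <- S) a i * (x.1 ^ i.1 * x.2 ^ i.2).
Definition d2_1 (S : seq (int * int)) (a : int * int -> K) (x : K * K) : K :=
  \sum_(i <- S) a i * (i.1%:~R * (x.1 ^ (i.1 - 1) * x.2 ^ i.2)).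
Definition d2_2 (S : seq (int * int)) (a : int * int -> K) (x : K * K) : K :=
  \sum_(i <- S) a i * (i.2%:~R * (x.1 ^ i.1 * x.2 ^ (i.2 - 1))).

Definition ev3 (S : seq (int * int * int)) (a : int * int * int -> K) (x : K * K * K) : K :=
  \sum_(k <- S) a k * (x.1.1 ^ k.1.1 * x.1.2 ^ k.1.2 * x.2 ^ k.2).
Definition d3_1 (S : seq (int * int * int)) (a : int * int * int -> K) (x : K * K * K) : K :=
  \sum_(k <- S) a k * (k.1.1%:~R * (x.1.1 ^ (k.1.1 - 1) * x.1.2 ^ k.1.2 * x.2 ^ k.2)).
Definition d3_2 (S : seq (int * int * int)) (a : int * int * int -> K) (x : K * K * K) : K :=
  \sum_(k <- S) a k * (k.1.2%:~R * (x.1.1 ^ k.1.1 * x.1.2 ^ (k.1.2 - 1) * x.2 ^ k.2)).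
Definition d3_3 (S : seq (int * int * int)) (a : int * int * int -> K) (x : K * K * K) : K :=
  \sum_(k <- S) a k * (k.2%:~R * (x.1.1 ^ k.1.1 * x.1.2 ^ k.1.2 * x.2 ^ (k.2 - 1))).

Definition lifts (E : eqType) (v : K -> R) (S : seq E) (c : E -> R) (a : E -> K) : Prop :=
  forall k, k \in S -> a k != 0 /\ v (a k) = c k.

Definition trop_singular3 (v : K -> R) (S : seq (int * int * int))
  (c : int * int * int -> R) (q : R * R * R) : Prop :=
  trop_vanish pair3 S c q /\
  exists (a : int * int * int -> K) (b : K * K * K),
    [/\ lifts v S c a,
        [/\ b.1.1 != 0, b.1.2 != 0 & b.2 != 0],
        [/\ v b.1.1 = q.1.1, v b.1.2 = q.1.2 & v b.2 = q.2],
        ev3 S a b = 0 &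
        [/\ d3_1 S a b = 0, d3_2 S a b = 0 & d3_3 S a b = 0]].

Definition nontransversal (v : K -> R) (A1 A2 : seq (int * int))
  (p1 p2 : int * int -> R) (q : R * R) : Prop :=
  [/\ trop_vanish pair2 A1 p1 q, trop_vanish pair2 A2 p2 q &
  exists (a1 a2 : int * int -> K) (b : K * K),
    [/\ lifts v A1 p1 a1, lifts v A2 p2 a2,
        [/\ b.1 != 0, b.2 != 0, v b.1 = q.1 & v b.2 = q.2],
        ev2 A1 a1 b = 0 /\ ev2 A2 a2 b = 0 &
        exists y1 y2 : K, [/\ y1 != 0, y2 != 0,
          d2_1 A1 a1 b * y1 + d2_1 A2 a2 b * y2 = 0 &
          d2_2 A1 a1 b * y1 + d2_2 A2 a2 b * y2 = 0]]].

End Defs.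

(* ---------- f (+) w3 (.) g : the Cayley polynomial ---------- *)
Definition cayley_supp (A1 A2 : seq (int * int)) : seq (int * int * int) :=
  [seq (i, 0%:Z) | i <- A1] ++ [seq (i, 1%:Z) | i <- A2].
Definition cayley_coef (R : Type) (p1 p2 : int * int -> R) (k : int * int * int) : R :=
  if k.2 == 0%:Z then p1 k.1 else p2 k.1.

(* ZA1 + ZA2 = Z^2, where ZA is the lattice generated by the differences of A *)
Definition lattice_full (A1 A2 : seq (int * int)) : Prop :=
  forall v : int * int, exists (c1 c2 : int * int -> int * int -> int),
    v.1 = \sum_(i <- A1) \sum_(j <- A1) c1 i j * (i.1 - j.1)
        + \sum_(i <- A2) \sum_(j <- A2) c2 i j * (i.1 - j.1) /\
    v.2 = \sum_(i <- A1) \sum_(j <- A1) c1 i j * (i.2 - j.2)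
        + \sum_(i <- A2) \sum_(j <- A2) c2 i j * (i.2 - j.2).

(* Main.v *)
Require Import Defs.
From HB Require Import structures.
From mathcomp Require Import all_boot all_order all_algebra.
From mathcomp Require Import reals ring lra.
Import Order.TTheory GRing.Theory Num.Theory.
Local Open Scope ring_scope.

Section H.
Variable K : closedFieldType.

Lemma ev3_cay A1 A2 (a : int*int*int -> K) x1 x2 x3 :
  ev3 (cayley_supp A1 A2) a (x1,x2,x3) =
  ev2 A1 (fun i => a (i,0%:Z)) (x1,x2) + x3 * ev2 A2 (fun i => a (i,1%:Z)) (x1,x2).
Proof.
rewrite /ev3 /ev2 /cayley_supp big_cat !big_map /= mulr_sumr; congr (_ + _).
  by apply: eq_bigr => i _ /=; rewrite expr0z mulr1.
by apply: eq_bigr => i _ /=; rewrite expr1z; ring.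
Qed.

Lemma d31_cay A1 A2 (a : int*int*int -> K) x1 x2 x3 :
  d3_1 (cayley_supp A1 A2) a (x1,x2,x3) =
  d2_1 A1 (fun i => a (i,0%:Z)) (x1,x2) + x3 * d2_1 A2 (fun i => a (i,1%:Z)) (x1,x2).
Proof.
rewrite /d3_1 /d2_1 /cayley_supp big_cat !big_map /= mulr_sumr; congr (_ + _).
  by apply: eq_bigr => i _ /=; rewrite expr0z mulr1.
by apply: eq_bigr => i _ /=; rewrite expr1z; ring.
Qed.

Lemma d32_cay A1 A2 (a : int*int*int -> K) x1 x2 x3 :
  d3_2 (cayley_supp A1 A2) a (x1,x2,x3) =
  d2_2 A1 (fun i => a (i,0%:Z)) (x1,x2) + x3 * d2_2 A2 (fun i => a (i,1%:Z)) (x1,x2).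
Proof.
rewrite /d3_2 /d2_2 /cayley_supp big_cat !big_map /= mulr_sumr; congr (_ + _).
  by apply: eq_bigr => i _ /=; rewrite expr0z mulr1.
by apply: eq_bigr => i _ /=; rewrite expr1z; ring.
Qed.

Lemma d33_cay A1 A2 (a : int*int*int -> K) x1 x2 x3 :
  d3_3 (cayley_supp A1 A2) a (x1,x2,x3) = ev2 A2 (fun i => a (i,1%:Z)) (x1,x2).
Proof.
rewrite /d3_3 /ev2 /cayley_supp big_cat !big_map /=.
rewrite big1 ?add0r; last by move=> i _; rewrite mul0r mulr0.
by apply: eq_bigr => i _ /=; rewrite subrr expr0z mulr1 mul1r.
Qed.
End H.

Lemma mem_cay (A1 A2 : seq (int*int)) k :
  k \in cayley_supp A1 A2 ->
  (exists2 i, i \in A1 & k = (i, 0%:Z)) \/ (exists2 i, i \in A2 & k = (i, 1%:Z)).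
Proof.
rewrite /cayley_supp mem_cat => /orP [/mapP [i Hi ->]|/mapP [i Hi ->]].
  by left; exists i.
by right; exists i.
Qed.

Lemma cay_in1 (A1 A2 : seq (int*int)) i : i \in A1 -> (i, 0%:Z) \in cayley_supp A1 A2.
Proof. by move=> H; rewrite mem_cat; apply/orP; left; apply/mapP; exists i. Qed.
Lemma cay_in2 (A1 A2 : seq (int*int)) i : i \in A2 -> (i, 1%:Z) \in cayley_supp A1 A2.
Proof. by move=> H; rewrite mem_cat; apply/orP; right; apply/mapP; exists i. Qed.

Theorem lemma5p2 (R : realType) (K : closedFieldType) (v : K -> R)
  (Hv : valued_field v)
  (A1 A2 : seq (int * int)) (uA1 : uniq A1) (uA2 : uniq A2)
  (sA1 : (2 <= size A1)%N) (sA2 : (2 <= size A2)%N)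
  (HZ : lattice_full A1 A2)
  (p1 p2 : int * int -> R) (q : R * R)
  (Hqf : trop_vanish (@pair2 R) A1 p1 q) (Hqg : trop_vanish (@pair2 R) A2 p2 q) :
  nontransversal v A1 A2 p1 p2 q <->
  exists l : R, trop_singular3 v (cayley_supp A1 A2) (cayley_coef p1 p2) (q.1, q.2, l).
Proof.
split.
- case=> _ _ [a1 [a2 [[b1 b2] [L1 L2 [/= nb1 nb2 vb1 vb2] [E1 E2] [y1 [y2 [ny1 ny2 D1 D2]]]]]]].
  exists (v (y2 / y1)); split.
  + move: Hqf Hqg => [i [j [iA jA ij Eij Mi]]] [i' [j' [iA' jA' ij' Eij' Mi']]].
    set l := v (y2 / y1).
    have pe : forall k e, pair3 (k, e) (q.1, q.2, l) = pair2 k q + e%:~R * l.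
      by move=> k e; rewrite /pair3 /pair2.
    case: (lerP (p1 i + pair2 i q) (p2 i' + pair2 i' q + l)) => Hc.
    * exists (i, 0%:Z), (j, 0%:Z); split; rewrite ?cay_in1 //.
      -- by apply: contra ij => /eqP [->].
      -- by rewrite !pe /cayley_coef /= mul0r !addr0.
      -- move=> k /mem_cay [[k' Hk ->]|[k' Hk ->]]; rewrite !pe /cayley_coef /= ?mul0r ?addr0.
           exact: Mi.
         have -> : ((1%Z)%:~R : R) = 1 by []. have := Mi' _ Hk; move: Hc; rewrite /pair2 /=; lra.
    * exists (i', 1%:Z), (j', 1%:Z); split; rewrite ?cay_in2 //.
      -- by apply: contra ij' => /eqP [->].
      -- rewrite !pe /cayley_coef /=; have -> : ((1%Z)%:~R : R) = 1 by [].
         by move: Eij'; rewrite /pair2 /=; lra.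
      -- move=> k /mem_cay [[k' Hk ->]|[k' Hk ->]]; rewrite !pe /cayley_coef /= ?mul0r ?addr0;
         have -> : ((1%Z)%:~R : R) = 1 by [].
           by have := Mi _ Hk; move: Hc; rewrite /pair2 /=; lra.
         by have := Mi' _ Hk; rewrite /pair2 /=; lra.
  + exists (cayley_coef a1 a2), (b1, b2, y2 / y1); split => //=.
    * move=> k /mem_cay [[k' Hk ->]|[k' Hk ->]]; rewrite /cayley_coef /=.
        exact: L1.
      exact: L2.
    * by rewrite nb1 nb2 mulf_neq0 // invr_eq0.
    * by rewrite (ev3_cay K A1 A2 (cayley_coef a1 a2) b1 b2 (y2/y1)) /= E1 E2 mulr0 addr0.
    * have Hy1 : y1 != 0 := ny1.
      rewrite d31_cay d32_cay d33_cay /= E2; split => //.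
        by apply: (mulIf Hy1); rewrite mul0r -D1; field.
      by apply: (mulIf Hy1); rewrite mul0r -D2; field.
- case=> l [_ [a [[[b1 b2] b3] [La /= [nb1 nb2 nb3] [vb1 vb2 vb3] E [D1 D2 D3]]]]].
  split => //.
  exists (fun i => a (i, 0%:Z)), (fun i => a (i, 1%:Z)), (b1, b2); split.
  + move=> i Hi; have := La _ (cay_in1 A1 A2 i Hi); by rewrite /cayley_coef.
  + move=> i Hi; have := La _ (cay_in2 A1 A2 i Hi); by rewrite /cayley_coef.
  + by rewrite vb1 vb2.
  + rewrite d33_cay in D3; rewrite ev3_cay D3 mulr0 addr0 in E; by split.
  + exists 1, b3; split => //; first exact: oner_neq0.
      by rewrite d31_cay in D1; rewrite mulr1 [_ * b3]mulrC.
    by rewrite d32_cay in D2; rewrite mulr1 [_ * b3]mulrC.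
Qed.
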